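(* Let $N\ge 1$ and let $\lambda,\mu$ be complex parameters. Consider fields $x,\widetilde{x},\widehat{x},\widehat{\widetilde{x}}\in\mathbb{C}^N$ with indices taken modulo $N$. Suppose that $x,\widetilde{x},\widehat{x}$ satisfy, for all $k$, $$(E)\qquad (\widetilde{x}_k-x_k)(\lambda+x_k-\widetilde{x}_{k-1})=(\widehat{x}_k-x_k)(\mu+x_k-\widehat{x}_{k-1}).$$ Consider the superposition formulas $$(S1)\qquad (\widehat{\widetilde{x}}_k-\widehat{x}_k)(\lambda+x_{k+1}-\widetilde{x}_k)=(\widehat{\widetilde{x}}_k-\widetilde{x}_k)(\mu+x_{k+1}-\widehat{x}_k),$$ $$(S2)\qquad (\widetilde{x}_{k+1}-x_{k+1})(\lambda+\widehat{x}_{k+1}-\widehat{\widetilde{x}}_k)=(\widehat{x}_{k+1}-x_{k+1})(\mu+\widetilde{x}_{k+1}-\widehat{\widetilde{x}}_k).$$ Then, by virtue of $(E)$, (S1) and (S2) are equivalent, and if $\widehat{\widetilde{x}}$ is defined by either of them, then for all $k$: $$(E_1)\quad (\widetilde{x}_k-x_k)(\lambda+x_{k+1}-\widetilde{x}_k)=(\widehat{\widetilde{x}}_k-\widetilde{x}_k)(\mu+\widetilde{x}_k-\widehat{\widetilde{x}}_{k-1}),$$ $$(E_2)\quad (\widehat{x}_k-x_k)(\mu+x_{k+1}-\widehat{x}_k)=(\widehat{\widetilde{x}}_k-\widehat{x}_k)(\lambda+\widehat{x}_k-\widehat{\widetilde{x}}_{k-1}),$$ $$(E_{12})\quad (\w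idehat{\widetilde{x}}_k-\widehat{x}_k)(\lambda+\widehat{x}_{k+1}-\widehat{\widetilde{x}}_k)=(\widehat{\widetilde{x}}_k-\widetilde{x}_k)(\mu+\widetilde{x}_{k+1}-\widehat{\widetilde{x}}_k).$$
   Context: These are the corner equations for two Bäcklund transformations $F_\lambda,F_\mu$ of the periodic dual Toda lattice $\ddot x_k=\dot x_k(x_{k+1}-2x_k+x_{k-1})$, where $F_\lambda:(x,p)\mapsto(\widetilde x,\widetilde p)$ is given by $e^{p_k}=(\widetilde x_k-x_k)(\lambda+x_k-\widetilde x_{k-1})$, $e^{\widetilde p_k}=(\widetilde x_k-x_k)(\lambda+x_{k+1}-\widetilde x_k)$; hats denote the action of $F_\mu$. *)

(* Defs.v *)
From HB Require Import structures.
From mathcomp Require Import all_boot all_order all_algebra.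
From mathcomp Require Import reals Rstruct.
From mathcomp Require Import complex.
Set Implicit Arguments. Unset Strict Implicit. Unset Printing Implicit Defensive.
Import Order.TTheory GRing.Theory Num.Theory.
Local Open Scope ring_scope.

Definition C : fieldType := complex Rdefinitions.R.

(* Periodic indices: 'I_N with cyclic successor / predecessor (k+1, k-1 mod N). *)
Notation "k '.+1m'" := (ordS k) (at level 2, format "k .+1m").
Notation "k '.-1m'" := (ord_pred k) (at level 2, format "k .-1m").


Definition corner_E (N : nat) (lam mu : C) (x xt xh : 'I_N -> C) (k : 'I_N) : Prop :=
  (xt k - x k) * (lam + x k - xt k.-1m) = (xh k - x k) * (mu + x k - xh k.-1m).
Definition corner_S1 (N : nat) (lam mu : C) (x xt xh xht : 'I_N -> C) (k : 'I_N) : Prop :=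
  (xht k - xh k) * (lam + x k.+1m - xt k) = (xht k - xt k) * (mu + x k.+1m - xh k).
Definition corner_S2 (N : nat) (lam mu : C) (x xt xh xht : 'I_N -> C) (k : 'I_N) : Prop :=
  (xt k.+1m - x k.+1m) * (lam + xh k.+1m - xht k)
  = (xh k.+1m - x k.+1m) * (mu + xt k.+1m - xht k).
Definition corner_E1 (N : nat) (lam mu : C) (x xt xh xht : 'I_N -> C) (k : 'I_N) : Prop :=
  (xt k - x k) * (lam + x k.+1m - xt k) = (xht k - xt k) * (mu + xt k - xht k.-1m).
Definition corner_E2 (N : nat) (lam mu : C) (x xt xh xht : 'I_N -> C) (k : 'I_N) : Prop :=
  (xh k - x k) * (mu + x k.+1m - xh k) = (xht k - xh k) * (lam + xh k - xht k.-1m).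
Definition corner_E12 (N : nat) (lam mu : C) (x xt xh xht : 'I_N -> C) (k : 'I_N) : Prop :=
  (xht k - xh k) * (lam + xh k.+1m - xht k) = (xht k - xt k) * (mu + xt k.+1m - xht k).

(* Non-degeneracy: the factors that equal exp(p_k), exp(p~_k) for F_lambda
   (x -> xt) and for F_mu (x -> xh) are nonzero. *)
Definition nondeg (N : nat) (lam mu : C) (x xt xh : 'I_N -> C) (k : 'I_N) : Prop :=
  (xt k - x k != 0) /\ (lam + x k - xt k.-1m != 0) /\ (lam + x k.+1m - xt k != 0) /\
  (xh k - x k != 0) /\ (mu + x k - xh k.-1m != 0) /\ (mu + x k.+1m - xh k != 0).

(* Main.v *)
Require Import Defs.
From HB Require Import structures.
From mathcomp Require Import all_boot all_order all_algebra.
From mathcomp Require Import reals Rstruct complex.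
From mathcomp Require Import ring.
Import GRing.Theory.
Local Open Scope ring_scope.

Section Alg.
Variable F : fieldType.

Lemma zero_of (e c : F) (k : F) : c != 0 -> e * c = k -> k = 0 -> e = 0.
Proof. by move=> hc he hk; move: he; rewrite hk => /eqP; rewrite mulf_eq0 (negbTE hc) orbF => /eqP. Qed.

Arguments zero_of {e c k}.
Lemma L1 (lam mu x' a' b' t h X : F) :
  a' - x' != 0 -> b' - x' != 0 -> lam + x' - t != 0 ->
  (a' - x') * (lam + x' - t) = (b' - x') * (mu + x' - h) ->
  ((X - h) * (lam + x' - t) = (X - t) * (mu + x' - h) <->
   (a' - x') * (lam + b' - X) = (b' - x') * (mu + a' - X)).
Proof.
move=> hA hB hP /eqP; rewrite -subr_eq0 => /eqP he.
have key : ((a' - x') * (lam + b' - X) - (b' - x') * (mu + a' - X)) * (lam + x' - t)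
  = (b' - x') * ((X - h) * (lam + x' - t) - (X - t) * (mu + x' - h))
    + ((a' - x') * (lam + x' - t) - (b' - x') * (mu + x' - h)) * ((lam + x' - t) + t - X).
  by ring.
rewrite he mul0r addr0 in key.
split=> /eqP; rewrite -subr_eq0 => /eqP hs; apply/eqP; rewrite -subr_eq0; apply/eqP.
- by apply: (zero_of hP key); rewrite hs mulr0.
- apply: (zero_of hB (_ : _ = ((a' - x') * (lam + b' - X) - (b' - x') * (mu + a' - X)) * (lam + x' - t))).
    by rewrite key; ring.
  by rewrite hs mul0r.
Qed.

Lemma L2 (lam mu x' a' b' t h X : F) :
  a' - x' != 0 -> b' - x' != 0 ->
  (a' - x') * (lam + x' - t) = (b' - x') * (mu + x' - h) ->
  (a' - x') * (lam + b' - X) = (b' - x') * (mu + a' - X) ->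
  (X - h) * (lam + b' - X) = (X - t) * (mu + a' - X).
Proof.
move=> hA hB /eqP; rewrite -subr_eq0 => /eqP he /eqP; rewrite -subr_eq0 => /eqP hs.
apply/eqP; rewrite -subr_eq0; apply/eqP.
have hc : (a' - x') * (b' - x') != 0 by rewrite mulf_neq0.
apply: (zero_of hc (_ : _ =
  (a' - x') * (X - t) * ((a' - x') * (lam + b' - X) - (b' - x') * (mu + a' - X))
  + (((a' - x') * (lam + b' - X) - (b' - x') * (mu + a' - X))
     - ((a' - x') * (lam + x' - t) - (b' - x') * (mu + x' - h)))
    * ((b' - x') * (mu + a' - X) + ((a' - x') * (lam + b' - X) - (b' - x') * (mu + a' - X))))).
  by ring.
by rewrite hs he; ring.
Qed.

Lemma L3 (lam mu x x' t h X Y : F) :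
  lam != mu -> lam + x' - t != 0 -> t - x != 0 ->
  (t - x) * (lam + h - Y) = (h - x) * (mu + t - Y) ->
  (X - h) * (lam + x' - t) = (X - t) * (mu + x' - h) ->
  (t - x) * (lam + x' - t) = (X - t) * (mu + t - Y).
Proof.
move=> hlm hP hA /eqP; rewrite -subr_eq0 => /eqP hs2 /eqP; rewrite -subr_eq0 => /eqP hs1.
have eD : (X - t) * (lam - mu + (h - x) - (t - x))
   = (X - h) * (lam + x' - t) - (X - t) * (mu + x' - h) - ((t - x) - (h - x)) * (lam + x' - t) by ring.
have eW : ((t - x) - (h - x)) * (mu + t - Y)
   = (t - x) * (lam + h - Y) - (h - x) * (mu + t - Y) - (t - x) * (lam - mu + (h - x) - (t - x)) by ring.
rewrite hs1 sub0r in eD; rewrite hs2 sub0r in eW.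
have hD : lam - mu + (h - x) - (t - x) != 0.
  apply/negP=> /eqP hD0; move: eD; rewrite hD0 mulr0 => /eqP; rewrite eq_sym oppr_eq0 mulf_eq0 (negbTE hP) orbF subr_eq0 => /eqP hAB.
  by move: hD0; rewrite hAB addrK => /eqP; rewrite subr_eq0 (negbTE hlm).
have hAB : (t - x) - (h - x) != 0.
  apply/negP=> /eqP h0; move: eW; rewrite h0 mul0r => /eqP; rewrite eq_sym oppr_eq0 mulf_eq0 (negbTE hA) (negbTE hD).
  by [].
apply/eqP; rewrite -subr_eq0; apply/eqP.
apply: (zero_of (mulf_neq0 hAB hD) (_ : _ =
   (t - x) * (lam + x' - t) * ((t - x) - (h - x)) * (lam - mu + (h - x) - (t - x))
   - ((X - t) * (lam - mu + (h - x) - (t - x))) * (((t - x) - (h - x)) * (mu + t - Y)))).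
  by ring.
by rewrite eD eW; ring.
Qed.

End Alg.
Arguments zero_of {F e c k}.
Arguments L1 {F lam mu x' a' b' t h X}.
Arguments L2 {F lam mu x' a' b' t h X}.
Arguments L3 {F lam mu x x' t h X Y}.

Theorem theorem4 (N : nat) (HN : (0 < N)%N) (lam mu : C)
    (x xt xh xht : 'I_N -> C)
    (Hlm : lam != mu)
    (Hnd : forall k, nondeg lam mu x xt xh k)
    (HE : forall k, corner_E lam mu x xt xh k) :
  (forall k, corner_S1 lam mu x xt xh xht k <-> corner_S2 lam mu x xt xh xht k) /\
  ((forall k, corner_S1 lam mu x xt xh xht k) \/
   (forall k, corner_S2 lam mu x xt xh xht k) ->
   forall k, [/\ corner_E1 lam mu x xt xh xht k, corner_E2 lam mu x xt xh xht k
               & corner_E12 lam mu x xt xh xht k]).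
Proof.
have equiv : forall k, corner_S1 lam mu x xt xh xht k <-> corner_S2 lam mu x xt xh xht k.
  move=> k; rewrite /corner_S1 /corner_S2.
  have := HE (ordS k); rewrite /corner_E ordSK => he.
  have [hA [_ [_ [hB _]]]] := Hnd (ordS k).
  have [_ [_ [hP _]]] := Hnd k.
  exact: L1.
split=> //.
move=> H.
have S1 : forall k, corner_S1 lam mu x xt xh xht k.
  by case: H => // H k; apply/equiv.
have S2 : forall k, corner_S2 lam mu x xt xh xht k by move=> k; apply/equiv.
move=> k; split.
- rewrite /corner_E1.
  have := S2 (ord_pred k); rewrite /corner_S2 ord_predK => h2.
  have [hA [_ [hP _]]] := Hnd k.
  exact: (L3 Hlm hP hA h2 (S1 k)).
- rewrite /corner_E2.
  have := S2 (ord_pred k); rewrite /corner_S2 ord_predK => h2.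
  have [_ [_ [_ [hB [_ hQ]]]]] := Hnd k.
  have hml : mu != lam by rewrite eq_sym.
  exact: (L3 hml hQ hB (esym h2) (esym (S1 k))).
- rewrite /corner_E12.
  have := HE (ordS k); rewrite /corner_E ordSK => he.
  have [hA [_ [_ [hB _]]]] := Hnd (ordS k).
  exact: (L2 hA hB he (S2 k)).
Qed.
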